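(* For a positive integer $n$ let $\Delta^{(odd)}_3([0,n))$ denote the number of odd evil integers in $[0,n)$ divisible by $3$ minus the number of odd odious integers in $[0,n)$ divisible by $3$. Then $$\lim_{n\to\infty}\frac{\ln \Delta^{(odd)}_3([0,n))}{\ln n}=\frac{\ln 3}{\ln 4}.$$
   Context: A nonnegative integer is called evil if its binary expansion contains an even number of 1's, and odious if it contains an odd number of 1's. $[0,n)$ denotes the set of integers $x$ with $0\le x<n$. *)

(* Defs.v *)
From Stdlib Require Import Reals ZArith List Arith Bool.
From Coquelicot Require Import Coquelicot.

Fixpoint pos_ones (p : positive) : nat :=
  match p with
  | xH => 1
  | xO q => pos_ones q
  | xI q => S (pos_ones q)
  end.

Definition ones (x : nat) : nat :=
  match N.of_nat x with
  | N0 => 0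
  | Npos p => pos_ones p
  end.

Definition evil (x : nat) : bool := Nat.even (ones x).
Definition odious (x : nat) : bool := Nat.odd (ones x).

Definition count_below (P : nat -> bool) (n : nat) : nat :=
  length (filter P (seq 0 n)).

Definition Delta_odd3 (n : nat) : Z :=
  (Z.of_nat (count_below (fun x => andb (andb (Nat.odd x) (Nat.eqb (x mod 3) 0)) (evil x)) n)
   - Z.of_nat (count_below (fun x => andb (andb (Nat.odd x) (Nat.eqb (x mod 3) 0)) (odious x)) n))%Z.

(* Main.v *)
Require Import Defs.
From Stdlib Require Import Reals ZArith NArith List Arith Bool Lia Lra.
From Coquelicot Require Import Coquelicot.
Section NatPart.
Local Open Scope nat_scope.

Lemma mod4 m r : (4*m+r) mod 3 = (m mod 3 + r) mod 3.
Proof. rewrite (Nat.div_mod_eq m 3) at 1.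
generalize (m/3) (m mod 3); intros q t.
replace (4 * (3 * q + t) + r) with ((t + r) + (4*q+t)*3) by lia.
apply Nat.Div0.mod_add. Qed.
Lemma mod40 m : (4*m) mod 3 = m mod 3.
Proof. replace (4*m) with (4*m+0) by lia. rewrite mod4, Nat.add_0_r. apply Nat.Div0.mod_mod. Qed.

Lemma ones_double y : ones (2*y) = ones y.
Proof. unfold ones. rewrite Nat2N.inj_mul. destruct (N.of_nat y); reflexivity. Qed.
Lemma ones_double1 y : ones (2*y+1) = S (ones y).
Proof. unfold ones. rewrite Nat2N.inj_add, Nat2N.inj_mul. destruct (N.of_nat y); reflexivity. Qed.

Definition sgn (x : nat) : Z := if evil x then 1%Z else (-1)%Z.
Lemma sgn_double y : sgn (2*y) = sgn y.
Proof. unfold sgn, evil. now rewrite ones_double. Qed.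
Lemma sgn_double1 y : sgn (2*y+1) = (- sgn y)%Z.
Proof. unfold sgn, evil. rewrite ones_double1, Nat.even_succ, <- Nat.negb_even.
destruct (Nat.even (ones y)); reflexivity. Qed.
Lemma sgn_4 m : sgn (4*m) = sgn m /\ sgn (4*m+1) = (- sgn m)%Z /\
  sgn (4*m+2) = (- sgn m)%Z /\ sgn (4*m+3) = sgn m.
Proof.
  replace (4*m) with (2*(2*m)) by lia. replace (2*(2*m)+1) with (2*(2*m)+1) by lia.
  replace (2*(2*m)+2) with (2*(2*m+1)) by lia.
  replace (2*(2*m)+3) with (2*(2*m+1)+1) by lia.
  rewrite !sgn_double, sgn_double1, !sgn_double1, sgn_double. lia.
Qed.

Definition f (x : nat) : Z := if Nat.odd x && (x mod 3 =? 0) then sgn x else 0%Z.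
Fixpoint Dsum (n : nat) : Z := match n with 0 => 0%Z | S k => (Dsum k + f k)%Z end.

Lemma count_S P n : count_below P (S n) = count_below P n + (if P n then 1 else 0).
Proof. unfold count_below. rewrite seq_S, filter_app, length_app. simpl.
destruct (P n); reflexivity. Qed.

Lemma Delta_eq n : Delta_odd3 n = Dsum n.
Proof.
  induction n; [reflexivity|]. unfold Delta_odd3 in *. rewrite !count_S. simpl Dsum.
  rewrite <- IHn. assert (Ho : odious n = negb (evil n)) by (unfold odious, evil; now rewrite <- Nat.negb_even).
  rewrite Ho. unfold f, sgn.
  destruct (Nat.odd n && (n mod 3 =? 0)); destruct (evil n); simpl; lia.
Qed.

Definition ind (u : nat) : Z := ((if Nat.eqb u 0 then 1 else 0) - (if Nat.eqb u 2 then 1 else 0))%Z.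
Definition g (y : nat) : Z := (sgn y * ind (y mod 3))%Z.
Fixpoint G (n : nat) : Z := match n with 0 => 0%Z | S k => (G k + g k)%Z end.

Lemma odd4 m : Nat.odd (4*m) = false /\ Nat.odd (4*m+1) = true /\ Nat.odd (4*m+2) = false.
Proof.
  rewrite <- !Nat.negb_even.
  replace (4*m) with (2*(2*m)) by lia. replace (2*(2*m)+1) with (S (2*(2*m))) by lia.
  replace (2*(2*m)+2) with (2*(2*m+1)) by lia.
  rewrite Nat.even_succ, <- Nat.negb_even, !Nat.even_mul. auto.
Qed.

Lemma mod3_cases m : m mod 3 = 0 \/ m mod 3 = 1 \/ m mod 3 = 2.
Proof. pose proof (Nat.mod_upper_bound m 3). lia. Qed.

Lemma sgn_pm m : sgn m = 1%Z \/ sgn m = (-1)%Z.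
Proof. unfold sgn; destruct (evil m); auto. Qed.

Lemma Dsum_4 m : Dsum (4*m) = G m.
Proof.
  induction m; [reflexivity|].
  replace (4 * S m) with (S (S (S (S (4*m))))) by lia. cbn [Dsum G]. rewrite IHm.
  destruct (odd4 m) as (o0 & o1 & o2). destruct (sgn_4 m) as (s0 & s1 & s2 & s3).
  unfold f, g. replace (S (4*m)) with (4*m+1) by lia.
  replace (S (4*m+1)) with (4*m+2) by lia. replace (S (4*m+2)) with (4*m+3) by lia.
  rewrite (mod4 m 1), (mod4 m 3).
  rewrite o0, o1, o2, s1, s3.
  replace (Nat.odd (4*m+3)) with true.
  2:{ replace (4*m+3) with (S (4*m+2)) by lia. rewrite Nat.odd_succ, <- Nat.negb_odd, o2. auto. }
  destruct (mod3_cases m) as [H|[H|H]]; rewrite H; simpl; unfold ind; simpl; lia.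
Qed.

Lemma G_4 m : G (4*m) = (3 * G m)%Z.
Proof.
  induction m; [reflexivity|].
  replace (4 * S m) with (S (S (S (S (4*m))))) by lia. cbn [G]. rewrite IHm.
  destruct (sgn_4 m) as (s0 & s1 & s2 & s3).
  unfold g. replace (S (4*m)) with (4*m+1) by lia.
  replace (S (4*m+1)) with (4*m+2) by lia. replace (S (4*m+2)) with (4*m+3) by lia.
  rewrite mod40, (mod4 m 1), (mod4 m 2), (mod4 m 3).
  rewrite s0, s1, s2, s3.
  destruct (mod3_cases m) as [H|[H|H]]; rewrite H; unfold ind; cbn -[Z.mul Z.add Z.opp G sgn]; lia.
Qed.

Lemma G_err m r : r < 4 -> (Z.abs (G (4*m+r) - 3 * G m) <= 2)%Z.
Proof.
  intro Hr. destruct (sgn_4 m) as (s0 & s1 & s2 & s3).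
  assert (Hg : forall k, k < 3 -> (Z.abs (g (4*m+k)) <= 1)%Z).
  { intros k _. unfold g, ind. destruct (sgn_pm (4*m+k)) as [E|E]; rewrite E;
    destruct (Nat.eqb _ 0), (Nat.eqb _ 2); simpl; lia. }
  pose proof (G_4 m) as H4.
  destruct r as [|[|[|[|r]]]]; try lia.
  - rewrite Nat.add_0_r, H4. simpl. lia.
  - replace (4*m+1) with (S (4*m)) by lia. cbn [G]. rewrite H4.
    pose proof (Hg 0). rewrite Nat.add_0_r in H. lia.
  - replace (4*m+2) with (S (S (4*m))) by lia. cbn [G]. rewrite H4.
    pose proof (Hg 0). rewrite Nat.add_0_r in H.
    replace (S (4*m)) with (4*m+1) by lia. pose proof (Hg 1). lia.
  - replace (4*m+3) with (S (S (S (4*m)))) by lia. cbn [G]. rewrite H4.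
    replace (S (4*m)) with (4*m+1) by lia. replace (S (4*m+1)) with (4*m+2) by lia.
    unfold g. rewrite s1, s2.
    rewrite (mod4 m 1), (mod4 m 2).
    rewrite mod40, s0.
    destruct (mod3_cases m) as [Hm|[Hm|Hm]]; rewrite Hm; unfold ind; cbn -[Z.mul Z.add Z.opp G sgn];
    destruct (sgn_pm m) as [E|E]; rewrite E; simpl; lia.
Qed.

Lemma Dsum_err m r : r < 4 -> (Z.abs (Dsum (4*m+r) - G m) <= 1)%Z.
Proof.
  intro Hr. pose proof (Dsum_4 m) as D4. destruct (odd4 m) as (o0 & o1 & o2).
  assert (Hf : forall x, (Z.abs (f x) <= 1)%Z).
  { intros x. unfold f. destruct (_ && _); [destruct (sgn_pm x) as [E|E]; rewrite E|]; simpl; lia. }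
  assert (F0 : f (4*m) = 0%Z) by (unfold f; now rewrite o0).
  assert (F2 : f (4*m+2) = 0%Z) by (unfold f; now rewrite o2).
  pose proof (Hf (4*m+1)).
  destruct r as [|[|[|[|r]]]]; try lia.
  - rewrite Nat.add_0_r, D4. simpl. lia.
  - replace (4*m+1) with (S (4*m)) by lia. cbn [Dsum]. rewrite D4, F0. lia.
  - replace (4*m+2) with (S (S (4*m))) by lia. cbn [Dsum]. rewrite D4, F0.
    replace (S (4*m)) with (4*m+1) by lia. lia.
  - replace (4*m+3) with (S (S (S (4*m)))) by lia. cbn [Dsum]. rewrite D4, F0.
    replace (S (4*m)) with (4*m+1) by lia. replace (S (4*m+1)) with (4*m+2) by lia.
    rewrite F2. lia.
Qed.

Lemma G_base n : 8 <= n < 32 -> (3 <= G n <= 9)%Z.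
Proof.
  intro H.
  assert (C : forallb (fun n => (3 <=? G n)%Z && (G n <=? 9)%Z) (seq 8 24) = true) by (vm_compute; reflexivity).
  rewrite forallb_forall in C. specialize (C n). rewrite in_seq in C.
  destruct (Z.leb_spec 3 (G n)), (Z.leb_spec (G n) 9); simpl in C; try lia.
  all: discriminate (C ltac:(lia)).
Qed.

Lemma G_bound n : 8 <= n -> exists k, 8*4^k <= n < 32*4^k /\
  (2*Z.of_nat(3^k)+1 <= G n <= 10*Z.of_nat(3^k)-1)%Z.
Proof.
  induction n as [n IH] using lt_wf_ind. intro Hn.
  destruct (Nat.lt_ge_cases n 32) as [Hs|Hb].
  - exists 0. simpl. pose proof (G_base n). lia.
  - pose proof (Nat.div_mod_eq n 4) as Hd. pose proof (Nat.mod_upper_bound n 4 ltac:(lia)).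
    set (m := n / 4) in *. set (r := n mod 4) in *.
    destruct (IH m ltac:(lia) ltac:(lia)) as [k [Hk HG]].
    exists (S k). rewrite !Nat.pow_succ_r'.
    pose proof (G_err m r H). rewrite Hd.
    rewrite Nat2Z.inj_mul. lia.
Qed.

Lemma D_bound n : 32 <= n -> exists k, 32*4^k <= n < 128*4^k /\
  (2*Z.of_nat(3^k) <= Delta_odd3 n <= 10*Z.of_nat(3^k))%Z.
Proof.
  intro Hn. rewrite Delta_eq.
  pose proof (Nat.div_mod_eq n 4) as Hd. pose proof (Nat.mod_upper_bound n 4 ltac:(lia)).
  set (m := n / 4) in *. set (r := n mod 4) in *.
  destruct (G_bound m ltac:(lia)) as [k [Hk HG]].
  exists k. pose proof (Dsum_err m r H). rewrite Hd. lia.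
Qed.
End NatPart.
Section RealPart.
Local Open Scope R_scope.
Lemma ln_le' x y : 0 < x -> x <= y -> ln x <= ln y.
Proof. intros Hx Hxy. destruct Hxy as [H|H]; [left; apply ln_increasing; lra| right; now subst]. Qed.
Lemma ln_lt_self x : 0 < x -> ln x < x.
Proof. intro Hx. rewrite <- (ln_exp x) at 2. apply ln_increasing; auto.
  pose proof (exp_ineq1 x ltac:(lra)). lra. Qed.
Lemma ln_pos x : 1 < x -> 0 < ln x.
Proof. intro H. rewrite <- ln_1. apply ln_increasing; lra. Qed.
Lemma ln4_gt1 : 1 < ln 4.
Proof. rewrite <- (ln_exp 1) at 1. apply ln_increasing. apply exp_pos. pose proof exp_le_3. lra. Qed.

Lemma real_step (k A B eps : R) : 0 < eps -> 0 < A < 10 -> 0 < B < 128 -> 424/eps < k ->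
  Rabs ((k * ln 3 + A) / (k * ln 4 + B) - ln 3 / ln 4) < eps.
Proof.
  intros He HA HB Hk.
  assert (H3 : 0 < ln 3 < 3) by (split; [apply ln_pos|apply ln_lt_self]; lra).
  assert (H4 : 1 < ln 4 < 4) by (split; [apply ln4_gt1|apply ln_lt_self]; lra).
  assert (Hk0 : 0 < k). { assert (0 < 424/eps) by (apply Rdiv_lt_0_compat; lra). lra. }
  assert (Hek : 424 < eps * k).
  { apply (Rmult_lt_compat_l eps) in Hk; auto. field_simplify in Hk; lra. }
  set (L3 := ln 3) in *. set (L4 := ln 4) in *.
  assert (Hd : 0 < L4 * (k * L4 + B)) by nra.
  replace ((k * L3 + A) / (k * L4 + B) - L3 / L4) with ((A * L4 - B * L3) / (L4 * (k * L4 + B)))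
    by (field; nra).
  set (N := A * L4 - B * L3). set (D := L4 * (k * L4 + B)).
  assert (0 < A * L4 < 40) by (split; nra).
  assert (0 < B * L3 < 384) by (split; nra).
  assert (HN : Rabs N < 424) by (apply Rabs_def1; unfold N; lra).
  assert (k <= k * L4) by nra.
  assert (k * L4 <= L4 * (k * L4)) by nra.
  assert (0 < L4 * B) by nra.
  assert (k <= D) by (unfold D; nra).
  assert (Hq : N / D * D = N) by (field; lra).
  set (q := N / D) in *.
  apply Rabs_def2 in HN. apply Rabs_def1; nra.
Qed.
End RealPart.

Lemma IZR_pow3 k : IZR (Z.of_nat (3 ^ k)) = (3 ^ k)%R.
Proof. rewrite <- INR_IZR_INZ, pow_INR. replace (INR 3) with 3%R by (simpl; lra). reflexivity. Qed.

Theorem theorem4 :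
  is_lim_seq (fun n : nat => ln (IZR (Delta_odd3 n)) / ln (INR n)) (ln 3 / ln 4).
Proof.
  apply is_lim_seq_spec. intro eps. destruct eps as [eps Heps]. simpl.
  destruct (nfloor_ex (424/eps)) as [K HK].
  { apply Rlt_le, Rdiv_lt_0_compat; lra. }
  exists (128 * 4^(S K))%nat. intros n Hn.
  assert (HP : (1 <= 4^(S K))%nat) by (apply Nat.neq_0_lt_0, Nat.pow_nonzero; lia).
  destruct (D_bound n ltac:(lia)) as [k [Hk HD]].
  assert (HkK : (S K < k)%nat).
  { destruct (Nat.le_gt_cases k (S K)) as [C|C]; auto.
    pose proof (Nat.pow_le_mono_r 4 _ _ ltac:(lia) C). lia. }
  assert (HkR : 424 / eps < INR k).
  { apply lt_INR in HkK. rewrite S_INR in HkK. lra. }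
  assert (HT : 0 < 3 ^ k) by (apply pow_lt; lra).
  assert (HF : 0 < 4 ^ k) by (apply pow_lt; lra).
  assert (HD' : 2 * 3^k <= IZR (Delta_odd3 n) <= 10 * 3^k).
  { destruct HD as [HD1 HD2]. apply IZR_le in HD1. apply IZR_le in HD2.
    rewrite mult_IZR, IZR_pow3 in HD1, HD2. split; assumption. }
  assert (Hx : 32 * 4^k <= INR n <= 128 * 4^k).
  { destruct Hk as [Hk1 Hk2]. apply le_INR in Hk1. apply Nat.lt_le_incl, le_INR in Hk2.
    rewrite mult_INR, pow_INR in Hk1, Hk2. simpl in Hk1, Hk2.
    replace (1+1+1+1)%R with 4 in * by lra.
    replace (INR 32) with 32 in Hk1 by (simpl; lra).
    replace (INR 128) with 128 in Hk2 by (simpl; lra). lra. }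
  set (D := IZR (Delta_odd3 n)) in *. set (x := INR n) in *.
  assert (ED : ln D = INR k * ln 3 + ln (D / 3^k)).
  { rewrite <- ln_pow by lra. rewrite <- ln_mult by (try apply Rdiv_lt_0_compat; lra).
    f_equal. field. lra. }
  assert (Ex : ln x = INR k * ln 4 + ln (x / 4^k)).
  { rewrite <- ln_pow by lra. rewrite <- ln_mult by (try apply Rdiv_lt_0_compat; lra).
    f_equal. field. lra. }
  assert (HA : 2 <= D / 3^k <= 10).
  { assert (E : D = D / 3^k * 3^k) by (field; lra). set (y := D / 3^k) in *. nra. }
  assert (HB : 32 <= x / 4^k <= 128).
  { assert (E : x = x / 4^k * 4^k) by (field; lra). set (y := x / 4^k) in *. nra. }
  rewrite ED, Ex. apply real_step; [lra| | |assumption].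
  - split.
    + apply Rlt_le_trans with (ln 2); [apply ln_pos; lra| apply ln_le'; lra].
    + apply Rle_lt_trans with (ln 10); [apply ln_le'; lra| apply ln_lt_self; lra].
  - split.
    + apply Rlt_le_trans with (ln 32); [apply ln_pos; lra| apply ln_le'; lra].
    + apply Rle_lt_trans with (ln 128); [apply ln_le'; lra| apply ln_lt_self; lra].
Qed.
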